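(* Let $(X,d_X)$ be a metric space and let $r,R\in(0,\infty)$. (i) $\Delta_X^{(c)}$ and $\Delta_X^{(u)}$ are non-decreasing functions. (ii) If $\Delta_X^{(c)}(R)<\infty$, then $\Delta_X^{(u)}(\Delta_X^{(c)}(R)+\varepsilon)\geq R$ for all $\varepsilon>0$. (iii) If $\Delta_X^{(u)}(r)>0$, then $\Delta_X^{(c)}(\Delta_X^{(u)}(r)-\varepsilon)\leq r$ for all $0<\varepsilon<\Delta_X^{(u)}(r)$. (iv) $\Delta_X^{(u)}(s)>0$ for all $s>0$ if and only if $\lim_{R\to0}\Delta_X^{(c)}(R)=0$. (v) $\Delta_X^{(c)}(s)<\infty$ for all $s\in[0,\infty)$ if and only if $\lim_{r\to\infty}\Delta_X^{(u)}(r)=\infty$.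
   Context: For a cover $\mathcal{U}$ of $X$: $\mathrm{diam}(\mathcal{U})=\sup_{U\in\mathcal{U}}\mathrm{diam}(U)$; $\mathcal{L}(\mathcal{U})=\sup\{d\in[0,\infty): \text{every } E\subseteq X \text{ with } \mathrm{diam}(E)<d \text{ is contained in some } U\in\mathcal{U}\}$; point-finite means each point lies in only finitely many members. $\Delta_X^{(u)},\Delta_X^{(c)}\colon[0,\infty)\to[0,\infty]$ are $\Delta_X^{(u)}(r)=\sup\{\mathcal{L}(\mathcal{U}): \mathcal{U} \text{ point-finite cover of } X,\ \mathrm{diam}(\mathcal{U})\leq r\}$ and $\Delta_X^{(c)}(R)=\inf\{\mathrm{diam}(\mathcal{U}): \mathcal{U} \text{ point-finite cover of } X,\ \mathcal{L}(\mathcal{U})\geq R\}$. (The condition in (iv) is the uniform Stone property and in (v) the coarse Stone property.) *)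

(* Defs.v *)
From HB Require Import structures.
From mathcomp Require Import all_boot all_order all_algebra.
From mathcomp Require Import all_classical all_reals all_analysis.
Set Implicit Arguments. Unset Strict Implicit. Unset Printing Implicit Defensive.
Import Order.TTheory GRing.Theory Num.Theory.
Local Open Scope classical_set_scope.
Local Open Scope ring_scope.

Section Defs.
Context {R : realType} {T : Type} (d : T -> T -> R).

(* d is a metric on the whole type T (the space X is T). *)
Definition is_metric : Prop :=
  (forall x y, d x y = 0 <-> x = y) /\
  (forall x y, d x y = d y x) /\
  (forall x y z, d x z <= d x y + d y z).

(* diameter of a subset, in [0, +oo]; diam(empty) = 0 *)
Definition diam (E : set T) : \bar R :=
  ereal_sup ([set z | exists x y, E x /\ E y /\ z = (d x y)%:E] `|` [set 0%E]).

Definition is_cover (U : set (set T)) : Prop :=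
  forall x, exists2 A, U A & A x.

Definition point_finite (U : set (set T)) : Prop :=
  forall x, finite_set [set A | U A /\ A x].

Definition pf_cover (U : set (set T)) : Prop := is_cover U /\ point_finite U.

(* diam(U) = sup of the diameters of members (0 for the empty family) *)
Definition cover_diam (U : set (set T)) : \bar R :=
  ereal_sup ([set diam A | A in U] `|` [set 0%E]).

Definition lebesgue_number (U : set (set T)) : \bar R :=
  ereal_sup [set delta%:E | delta in
    [set delta : R | 0 <= delta /\
       forall E : set T, (diam E < delta%:E)%E -> exists2 A, U A & E `<=` A]].

Definition Delta_u (r : R) : \bar R :=
  ereal_sup [set lebesgue_number U | U in
    [set U | pf_cover U /\ (cover_diam U <= r%:E)%E]].

Definition Delta_c (Rr : R) : \bar R :=
  ereal_inf [set cover_diam U | U in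
    [set U | pf_cover U /\ (Rr%:E <= lebesgue_number U)%E]].

End Defs.

(* Main.v *)
Require Import Defs.
From HB Require Import structures.
From mathcomp Require Import all_boot all_order all_algebra.
From mathcomp Require Import all_classical all_reals all_analysis.
Import Order.TTheory GRing.Theory Num.Theory.
Local Open Scope classical_set_scope.
Local Open Scope ring_scope.

Section Helpers.
Context {R : realType} {T : Type} (d : T -> T -> R).

Lemma cd_ge0 U : (0 <= cover_diam d U)%E.
Proof. by apply: ereal_sup_ubound; right. Qed.

Lemma Dc_ge0 s : (0 <= Delta_c d s)%E.
Proof.
apply: le_ereal_inf_tmp => _ [U _ <-]; exact: cd_ge0.
Qed.

Lemma Du_ge U r : pf_cover U -> (cover_diam d U <= r%:E)%E ->
  (lebesgue_number d U <= Delta_u d r)%E.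
Proof. by move=> pU hU; apply: ereal_sup_ubound; exists U. Qed.

Lemma Dc_le U s : pf_cover U -> (s%:E <= lebesgue_number d U)%E ->
  (Delta_c d s <= cover_diam d U)%E.
Proof. by move=> pU hU; apply: ereal_inf_lbound; exists U. Qed.

Lemma Du_gt r x : (x < Delta_u d r)%E -> exists U, [/\ pf_cover U,
  (cover_diam d U <= r%:E)%E & (x < lebesgue_number d U)%E].
Proof. by move=> /ereal_sup_gt [_ [U [pU hU] <-] xl]; exists U. Qed.

Lemma Dc_lt s x : (Delta_c d s < x)%E -> exists U, [/\ pf_cover U,
  (s%:E <= lebesgue_number d U)%E & (cover_diam d U < x)%E].
Proof. by move=> /ereal_inf_lt [_ [U [pU hU] <-] xl]; exists U. Qed.

End Helpers.
Arguments Du_ge {R T d U r}.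
Arguments Dc_le {R T d U s}.
Arguments Du_gt {R T d r x}.
Arguments Dc_lt {R T d s x}.

Theorem lemma3p4 (R : realType) (T : Type) (d : T -> T -> R) :
  is_metric d ->
  (* (i) monotonicity on [0, oo) *)
  ((forall s t : R, 0 <= s -> s <= t -> (Delta_c d s <= Delta_c d t)%E) /\
   (forall s t : R, 0 <= s -> s <= t -> (Delta_u d s <= Delta_u d t)%E)) /\
  (* (ii) *)
  (forall Rr : R, 0 < Rr -> (Delta_c d Rr < +oo)%E ->
     forall eps : R, 0 < eps ->
       (Rr%:E <= Delta_u d (fine (Delta_c d Rr) + eps))%E) /\
  (* (iii) (Delta_u r finite, so that Delta_u r - eps lies in the domain) *)
  (forall r : R, 0 < r -> (0 < Delta_u d r)%E -> (Delta_u d r < +oo)%E ->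
     forall eps : R, 0 < eps -> (eps%:E < Delta_u d r)%E ->
       (Delta_c d (fine (Delta_u d r) - eps) <= r%:E)%E) /\
  (* (iv) uniform Stone property *)
  ((forall s : R, 0 < s -> (0 < Delta_u d s)%E) <->
     (Delta_c d x @[x --> 0^'+] --> 0%E)) /\
  (* (v) coarse Stone property *)
  ((forall s : R, 0 <= s -> (Delta_c d s < +oo)%E) <->
     (Delta_u d x @[x --> +oo] --> +oo%E)).
Proof.
move=> _.
split; [split|].
- move=> s t _ st; apply: le_ereal_inf_tmp => _ [U [pU hU] <-].
  apply: Dc_le => //; apply: le_trans hU; by rewrite lee_fin.
- move=> s t _ st; apply: ge_ereal_sup => _ [U [pU hU] <-].
  apply: Du_ge => //; apply: le_trans hU _; by rewrite lee_fin.
split.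
  move=> Rr _ cfin eps eps0.
  have c0 := Dc_ge0 d Rr.
  have ce : Delta_c d Rr = (fine (Delta_c d Rr))%:E.
    by rewrite fineK // ge0_fin_numE.
  have : (Delta_c d Rr < (fine (Delta_c d Rr) + eps)%:E)%E.
    by rewrite {1}ce lte_fin ltrDl.
  move=> /Dc_lt [U [pU hR hc]].
  apply: le_trans hR _; apply: Du_ge => //; exact: ltW.
split.
  move=> r _ u0 ufin eps eps0 _.
  have ue : Delta_u d r = (fine (Delta_u d r))%:E.
    by rewrite fineK // ge0_fin_numE // ltW.
  have : ((fine (Delta_u d r) - eps)%:E < Delta_u d r)%E.
    by rewrite {2}ue lte_fin ltrBlDr ltrDl.
  move=> /Du_gt [U [pU hc hl]].
  apply: le_trans hc; apply: Dc_le => //; exact: ltW.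
split.
  split.
  - move=> H.
    have Hn : forall s : R, 0 < s ->
        \forall x \near 0^'+, (Delta_c d x <= s%:E)%E.
      move=> s s0.
      have [U [pU hc hl]] := Du_gt (H s s0).
      have [_ [delta [d0 dP] <-] dpos] := ereal_sup_gt hl.
      rewrite lte_fin in dpos.
      apply: filterS (nbhs_right_le dpos) => x xd.
      apply: le_trans hc; apply: Dc_le => //.
      apply: le_trans (_ : delta%:E <= _)%E; first by rewrite lee_fin.
      by apply: ereal_sup_ubound; exists delta.
    apply/fine_cvgP; split.
      apply: filterS (Hn 1 ltr01) => x x1.
      by rewrite ge0_fin_numE ?Dc_ge0 // (le_lt_trans x1) ?ltry.
    apply/cvgrPdist_lt => e e0.
    have He2 : 0 < e / 2 by rewrite divr_gt0.
    move: (Hn _ He2); apply: filterS => x /=.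
    have := Dc_ge0 d x; case: (Delta_c d x) => [y| |] //=.
    rewrite !lee_fin => y0 ye.
    rewrite sub0r normrN ger0_norm //; apply: le_lt_trans ye _.
    by rewrite ltr_pdivrMr // ltr_pMr // ltr1n.
  - move=> /fine_cvgP [Hfin Hc] s s0.
    have := Hc; move=> /cvgrPdist_lt /(_ s s0) Hd.
    have [x [[x0 xf] xd]] := filter_ex (filterI (filterI (nbhs_right_gt 0) Hfin) Hd).
    have : (Delta_c d x < s%:E)%E.
      rewrite -(fineK xf) lte_fin; apply: le_lt_trans xd.
      by rewrite sub0r normrN ler_norm.
    move=> /Dc_lt [U [pU hl hc]].
    apply: lt_le_trans (Du_ge pU (ltW hc)).
    by apply: lt_le_trans hl; rewrite lte_fin.
split.
- move=> H; apply/cvgeyPgt => A.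
  have s0 : 0 <= Num.max A 0 + 1 by rewrite addr_ge0 // le_max lexx orbT.
  have [U [pU hl hc]] := Dc_lt (H _ s0).
  have cfin : cover_diam d U = (fine (cover_diam d U))%:E.
    by rewrite fineK // ge0_fin_numE // cd_ge0.
  apply: filterS (nbhs_pinfty_ge (num_real (fine (cover_diam d U)))) => x cx.
  apply: lt_le_trans (Du_ge pU _); last by rewrite cfin lee_fin.
  apply: lt_le_trans hl; rewrite lte_fin.
  have hA : A <= Num.max A 0 by rewrite le_max lexx.
  by apply: le_lt_trans hA _; rewrite ltrDl ltr01.
- move=> /cvgeyPgt H s s0.
  have [x hx] := filter_ex (H s).
  have [U [pU hc hl]] := Du_gt hx.
  apply: le_lt_trans (Dc_le pU (ltW hl)) _.
  by apply: le_lt_trans hc _; rewrite ltry.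
Qed.
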